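(* Assume (A1)–(A4), let $b$ be consistent, let $\delta>0$, $\tau>1$, and $\|b^\delta-b\|\le\delta$. Then there exists a finite integer $k_\delta\ge1$ which is the first index $k\ge1$ satisfying the stopping criterion $$\rho_1^2\|Ax_k^\delta-b^\delta\|^2+\rho_2^2\|Wx_k^\delta-y_k^\delta\|^2\le\max(\rho_1^2,\rho_2^2)\tau^2\delta^2.$$ Moreover, there exist constants $c,C>0$ depending only on $\rho_2,\tau,c_0$ such that for all integers $1\le m<n<k_\delta$ and every feasible point $(\hat x,\hat y)$, $$D_{\mu_n^\delta}f(\hat y,y_n^\delta)+c\sum_{k=m}^nE_k^\delta\le D_{\mu_m^\delta}f(\hat y,y_m^\delta)+\rho_2\langle y_{m-1}^\delta-y_m^\delta,W(\hat x-x_{m+1}^\delta)\rangle+C\big(\|W(\hat x-x_m^\delta)\|^2+\|s_m^\delta\|^2+E_m^\delta\big).$$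
   Context: $\mathcal X,\mathcal Y,\mathcal H$ are real Hilbert spaces. Standing assumptions: (A1) $A:\mathcal X\to\mathcal H$ is bounded linear. (A2) $f:\mathcal Y\to(-\infty,\infty]$ is proper, lower semicontinuous and strongly convex with constant $c_0>0$: $f(ty_1+(1-t)y_2)+c_0t(1-t)\|y_1-y_2\|^2\le tf(y_1)+(1-t)f(y_2)$ for all $y_1,y_2$, $t\in[0,1]$. (A3) $W:\mathscr D(W)\subset\mathcal X\to\mathcal Y$ is a densely defined closed linear operator. (A4) There is $c_1>0$ with $\|Ax\|^2+\|Wx\|^2\ge c_1\|x\|^2$ for all $x\in\mathscr D(W)$. $\mathscr D(f)=\{y:f(y)<\infty\}$; $b$ is consistent if $b=Ax$ for some $x\in\mathscr D(W)$ with $Wx\in\mathscr D(f)$. A feasible point is a pair $(\hat x,\hat y)$ with $\hat x\in\mathscr D(W)$, $\hat y\in\mathscr D(f)$, $A\hat x=b$, $W\hat x=\hat y$. Noisy ADMM: fix $\rho_1,\rho_2>0$ and initial $y_0^\delta\in\mathcal Y$, $\lambda_0^\delta\in\mathcal H$, $\mu_0^\delta\in\mathcal Y$. For $k=0,1,\dots$: $x_{k+1}^\delta=\arg\min_{x\in\mathscr D(W)}\{\langle\lambda_k^\delta,Ax\rangle+\langle\mu_k^\delta,Wx\rangle+\frac{\rho_1}{2}\|Ax-b^\delta\|^2+\frac{\rho_2}{2}\|Wx-y_k^\delta\|^2\}$, $y_{k+1}^\delta=\arg\min_{y\in\mathcal Y}\{f(y)-\langle\mu_k^\delta,y\rangle+\frac{\rho_2}{2}\|Wx_{k+1}^\delta-y\|^2\}$,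 $\lambda_{k+1}^\delta=\lambda_k^\delta+\rho_1(Ax_{k+1}^\delta-b^\delta)$, $\mu_{k+1}^\delta=\mu_k^\delta+\rho_2(Wx_{k+1}^\delta-y_{k+1}^\delta)$. (These minimizers exist and are unique; $\mu_k^\delta\in\partial f(y_k^\delta)$ for $k\ge1$.) Notation: $r_k^\delta=Ax_k^\delta-b^\delta$, $s_k^\delta=Wx_k^\delta-y_k^\delta$, $E_k^\delta=\rho_1\|r_k^\delta\|^2+\rho_2\|s_k^\delta\|^2+\rho_2\|y_k^\delta-y_{k-1}^\delta\|^2$ for $k\ge1$. Bregman distance: for $y$ with $\mu\in\partial f(y)$, $D_\mu f(\bar y,y)=f(\bar y)-f(y)-\langle\mu,\bar y-y\rangle$. *)

(* Defs.v *)
From Stdlib Require Import Reals Lra Lia.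
Open Scope R_scope.

Record HilbertSpace := {
  hs_car :> Type;
  hs_zero : hs_car;
  hs_add : hs_car -> hs_car -> hs_car;
  hs_opp : hs_car -> hs_car;
  hs_scal : R -> hs_car -> hs_car;
  hs_inner : hs_car -> hs_car -> R;
  hs_add_assoc : forall u v w, hs_add u (hs_add v w) = hs_add (hs_add u v) w;
  hs_add_comm : forall u v, hs_add u v = hs_add v u;
  hs_add_0 : forall u, hs_add hs_zero u = u;
  hs_add_opp : forall u, hs_add u (hs_opp u) = hs_zero;
  hs_scal_assoc : forall a b u, hs_scal a (hs_scal b u) = hs_scal (a * b) u;
  hs_scal_1 : forall u, hs_scal 1 u = u;
  hs_scal_distr_l : forall a u v, hs_scal a (hs_add u v) = hs_add (hs_scal a u) (hs_scal a v);
  hs_scal_distr_r : forall a b u, hs_scal (a + b) u = hs_add (hs_scal a u) (hs_scal b u);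
  hs_inner_sym : forall u v, hs_inner u v = hs_inner v u;
  hs_inner_add : forall u v w, hs_inner (hs_add u v) w = hs_inner u w + hs_inner v w;
  hs_inner_scal : forall a u v, hs_inner (hs_scal a u) v = a * hs_inner u v;
  hs_inner_nonneg : forall u, 0 <= hs_inner u u;
  hs_inner_def : forall u, hs_inner u u = 0 -> u = hs_zero;
  hs_complete : forall s : nat -> hs_car,
    (forall eps, 0 < eps -> exists N, forall n m, (N <= n)%nat -> (N <= m)%nat ->
        sqrt (hs_inner (hs_add (s n) (hs_opp (s m))) (hs_add (s n) (hs_opp (s m)))) < eps) ->
    exists l, forall eps, 0 < eps -> exists N, forall n, (N <= n)%nat ->
        sqrt (hs_inner (hs_add (s n) (hs_opp l)) (hs_add (s n) (hs_opp l))) < eps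
}.

Arguments hs_zero {h}.
Arguments hs_add {h}.
Arguments hs_opp {h}.
Arguments hs_scal {h}.
Arguments hs_inner {h}.

Definition hsub {X : HilbertSpace} (u v : X) : X := hs_add u (hs_opp v).
Definition hnorm {X : HilbertSpace} (u : X) : R := sqrt (hs_inner u u).

Definition hconv {X : HilbertSpace} (s : nat -> X) (l : X) : Prop :=
  forall eps, 0 < eps -> exists N, forall n, (N <= n)%nat -> hnorm (hsub (s n) l) < eps.

Definition bounded_linear {X H : HilbertSpace} (A : X -> H) : Prop :=
  (forall u v, A (hs_add u v) = hs_add (A u) (A v)) /\
  (forall a u, A (hs_scal a u) = hs_scal a (A u)) /\
  (exists M, forall u, hnorm (A u) <= M * hnorm u).

(** (A3) densely defined closed linear operator W with domain D (values of W
    outside D are irrelevant). *)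
Definition densely_defined_closed {X Y : HilbertSpace} (D : X -> Prop) (W : X -> Y) : Prop :=
  D hs_zero /\
  (forall u v, D u -> D v -> D (hs_add u v)) /\
  (forall a u, D u -> D (hs_scal a u)) /\
  (forall u v, D u -> D v -> W (hs_add u v) = hs_add (W u) (W v)) /\
  (forall a u, D u -> W (hs_scal a u) = hs_scal a (W u)) /\
  (forall u eps, 0 < eps -> exists v, D v /\ hnorm (hsub u v) < eps) /\
  (forall (s : nat -> X) u v, (forall n, D (s n)) -> hconv s u -> hconv (fun n => W (s n)) v ->
     D u /\ W u = v).

(** An extended-real-valued function f : Y -> (-oo, +oo] is represented by its
    effective domain domf and a real-valued f, with f = +oo outside domf. *)

(** proper and lower semicontinuous: for every y and every real t < f(y),
    f > t on a neighbourhood of y. *)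
Definition proper_lsc {Y : HilbertSpace} (domf : Y -> Prop) (f : Y -> R) : Prop :=
  (exists y, domf y) /\
  (forall y t, (~ domf y \/ t < f y) ->
     exists eps, 0 < eps /\ forall z, hnorm (hsub z y) < eps -> (~ domf z \/ t < f z)).

(** (A2) strong convexity with constant c0 (trivially true, in extended
    arithmetic, when y1 or y2 is outside the domain). *)
Definition strongly_convex {Y : HilbertSpace} (domf : Y -> Prop) (f : Y -> R) (c0 : R) : Prop :=
  forall y1 y2 t, domf y1 -> domf y2 -> 0 <= t <= 1 ->
    domf (hs_add (hs_scal t y1) (hs_scal (1 - t) y2)) /\
    f (hs_add (hs_scal t y1) (hs_scal (1 - t) y2)) + c0 * t * (1 - t) * (hnorm (hsub y1 y2)) ^ 2
      <= t * f y1 + (1 - t) * f y2.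

Definition consistent {X Y H : HilbertSpace} (A : X -> H) (D : X -> Prop) (W : X -> Y)
  (domf : Y -> Prop) (b : H) : Prop :=
  exists x, D x /\ domf (W x) /\ A x = b.

Definition feasible {X Y H : HilbertSpace} (A : X -> H) (D : X -> Prop) (W : X -> Y)
  (domf : Y -> Prop) (b : H) (xh : X) (yh : Y) : Prop :=
  D xh /\ domf yh /\ A xh = b /\ W xh = yh.

Definition bregman {Y : HilbertSpace} (f : Y -> R) (mu : Y) (ybar y : Y) : R :=
  f ybar - f y - hs_inner mu (hsub ybar y).

(** The noisy ADMM iteration: the sequences x, y, lam, mu (with arbitrary
    initial values y 0, lam 0, mu 0; x 0 unused) satisfy the ADMM recursion. *)
Definition noisy_admm {X Y H : HilbertSpace} (A : X -> H) (D : X -> Prop) (W : X -> Y)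
  (domf : Y -> Prop) (f : Y -> R) (rho1 rho2 : R) (bd : H)
  (x : nat -> X) (y : nat -> Y) (lam : nat -> H) (mu : nat -> Y) : Prop :=
  forall k : nat,
    (D (x (S k)) /\
     forall z, D z ->
       hs_inner (lam k) (A (x (S k))) + hs_inner (mu k) (W (x (S k)))
       + rho1 / 2 * (hnorm (hsub (A (x (S k))) bd)) ^ 2
       + rho2 / 2 * (hnorm (hsub (W (x (S k))) (y k))) ^ 2
       <= hs_inner (lam k) (A z) + hs_inner (mu k) (W z)
       + rho1 / 2 * (hnorm (hsub (A z) bd)) ^ 2
       + rho2 / 2 * (hnorm (hsub (W z) (y k))) ^ 2) /\
    (domf (y (S k)) /\
     forall z, domf z ->
       f (y (S k)) - hs_inner (mu k) (y (S k)) + rho2 / 2 * (hnorm (hsub (W (x (S k))) (y (S k)))) ^ 2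
       <= f z - hs_inner (mu k) z + rho2 / 2 * (hnorm (hsub (W (x (S k))) z)) ^ 2) /\
    lam (S k) = hs_add (lam k) (hs_scal rho1 (hsub (A (x (S k))) bd)) /\
    mu (S k) = hs_add (mu k) (hs_scal rho2 (hsub (W (x (S k))) (y (S k)))).

Definition stop_crit {X Y H : HilbertSpace} (A : X -> H) (W : X -> Y) (rho1 rho2 tau delta : R)
  (bd : H) (x : nat -> X) (y : nat -> Y) (k : nat) : Prop :=
  rho1 ^ 2 * (hnorm (hsub (A (x k)) bd)) ^ 2 + rho2 ^ 2 * (hnorm (hsub (W (x k)) (y k))) ^ 2
  <= Rmax (rho1 ^ 2) (rho2 ^ 2) * tau ^ 2 * delta ^ 2.

Definition first_stop {X Y H : HilbertSpace} (A : X -> H) (W : X -> Y) (rho1 rho2 tau delta : R)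
  (bd : H) (x : nat -> X) (y : nat -> Y) (kd : nat) : Prop :=
  (1 <= kd)%nat /\ stop_crit A W rho1 rho2 tau delta bd x y kd /\
  forall k, (1 <= k)%nat -> (k < kd)%nat -> ~ stop_crit A W rho1 rho2 tau delta bd x y k.

(** E_k^delta (used for k >= 1) *)
Definition Ek {X Y H : HilbertSpace} (A : X -> H) (W : X -> Y) (rho1 rho2 : R) (bd : H)
  (x : nat -> X) (y : nat -> Y) (k : nat) : R :=
  rho1 * (hnorm (hsub (A (x k)) bd)) ^ 2 + rho2 * (hnorm (hsub (W (x k)) (y k))) ^ 2
  + rho2 * (hnorm (hsub (y k) (y (k - 1)%nat))) ^ 2.

Definition sum_range (m n : nat) (g : nat -> R) : R :=
  sum_f_R0 (fun i => g (m + i)%nat) (n - m).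

(* Main.v *)
Require Import Defs.
From Stdlib Require Import Reals Lra Lia Classical.
Open Scope R_scope.

Lemma ip_zero_l {X : HilbertSpace} (v : X) : hs_inner hs_zero v = 0.
Proof.
  pose proof (hs_inner_add X hs_zero hs_zero v) as E.
  rewrite hs_add_0 in E. lra.
Qed.

Lemma ip_opp_l {X : HilbertSpace} (u v : X) : hs_inner (hs_opp u) v = - hs_inner u v.
Proof.
  pose proof (hs_inner_add X u (hs_opp u) v) as E.
  rewrite hs_add_opp, ip_zero_l in E. lra.
Qed.

Lemma ip_add_r {X : HilbertSpace} (u v w : X) : hs_inner u (hs_add v w) = hs_inner u v + hs_inner u w.
Proof. rewrite !(hs_inner_sym X u). apply hs_inner_add. Qed.

Lemma ip_scal_r {X : HilbertSpace} a (u v : X) : hs_inner u (hs_scal a v) = a * hs_inner u v.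
Proof. rewrite !(hs_inner_sym X u). apply hs_inner_scal. Qed.

Lemma ip_opp_r {X : HilbertSpace} (u v : X) : hs_inner u (hs_opp v) = - hs_inner u v.
Proof. rewrite !(hs_inner_sym X u). apply ip_opp_l. Qed.

Lemma ip_zero_r {X : HilbertSpace} (v : X) : hs_inner v hs_zero = 0.
Proof. rewrite hs_inner_sym. apply ip_zero_l. Qed.

Ltac hexp := unfold hsub in *;
  repeat (rewrite ?hs_inner_add, ?ip_add_r, ?hs_inner_scal, ?ip_scal_r,
                  ?ip_opp_l, ?ip_opp_r, ?ip_zero_l, ?ip_zero_r).

Ltac hsym := repeat match goal with |- context[@hs_inner ?X ?a ?b] =>
   match goal with |- context[@hs_inner X b a] =>
     tryif constr_eq a b then fail else rewrite (hs_inner_sym X b a) end end.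

Lemma hnorm_sq {X : HilbertSpace} (u : X) : hnorm u ^ 2 = hs_inner u u.
Proof. unfold hnorm. rewrite pow2_sqrt; auto. apply hs_inner_nonneg. Qed.



Lemma vec_eq {X : HilbertSpace} (u v : X) : hs_inner (hsub u v) (hsub u v) = 0 -> u = v.
Proof.
  intro E. apply hs_inner_def in E. unfold hsub in E.
  rewrite <- (hs_add_0 X v). rewrite <- E.
  rewrite <- hs_add_assoc, (hs_add_comm X (hs_opp v) v), hs_add_opp.
  rewrite hs_add_comm, hs_add_0. reflexivity.
Qed.

Lemma opp_scal {X : HilbertSpace} (u : X) : hs_opp u = hs_scal (-1) u.
Proof. apply vec_eq. hexp. lra. Qed.

Lemma quad0 (g h : R) : (forall t, 0 <= g * t + h * (t * t)) -> g = 0.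
Proof.
  intro Hq. destruct (Req_dec g 0) as [|Hg]; auto. exfalso.
  set (a := Rabs h + 1).
  assert (Ha : 0 < a) by (unfold a; pose proof (Rabs_pos h); lra).
  assert (Hh : h < 2 * a) by (unfold a; pose proof (Rle_abs h); pose proof (Rabs_pos h); lra).
  specialize (Hq (- g / (2 * a))).
  assert (E : g * (- g / (2 * a)) + h * ((- g / (2 * a)) * (- g / (2 * a)))
            = (g * g) * (h - 2 * a) / (4 * a * a)) by (field; lra).
  rewrite E in Hq.
  assert (Hgg : 0 < g * g) by (apply Rsqr_pos_lt; auto).
  assert (0 < 4 * a * a) by nra.
  assert (Hn : (g * g) * (h - 2 * a) < 0) by nra.
  assert (Hn2 : (g * g) * (h - 2 * a) / (4 * a * a) < 0).
  { unfold Rdiv. apply Rmult_neg_pos; auto. apply Rinv_0_lt_compat; lra. }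
  lra.
Qed.

Lemma small_t (a b : R) : (forall t, 0 < t <= 1 -> 0 <= a + t * b) -> 0 <= a.
Proof.
  intro Hq. destruct (Rle_or_lt 0 a) as [|Ha]; auto. exfalso.
  set (e := - a). set (B := Rabs b).
  assert (0 <= B) by apply Rabs_pos.
  assert (Hb : - B <= b) by (unfold B; pose proof (Rle_abs (-b)); rewrite Rabs_Ropp in *; lra).
  set (t := e / (e + B + 1)).
  assert (Hd : 0 < e + B + 1) by (unfold e; lra).
  assert (Ht1 : 0 < t) by (unfold t, e; apply Rdiv_lt_0_compat; lra).
  assert (Ht2 : t * (e + B + 1) = e) by (unfold t; field; lra).
  assert (t <= 1). { destruct (Rle_or_lt t 1); auto. nra. }
  specialize (Hq t (conj Ht1 H0)).
  assert (b <= B) by (unfold B; apply Rle_abs). assert (t * b <= t * B) by nra.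
  assert (t * B < e) by nra.
  unfold e in *. lra.
Qed.

Lemma cs_up {X : HilbertSpace} (a : R) (p q : X) : 0 < a ->
  hs_inner p q <= (a * hs_inner p p + / a * hs_inner q q) / 2.
Proof.
  intro Ha. pose proof (hs_inner_nonneg X (hsub (hs_scal a p) q)) as N. revert N.
  hexp. hsym. intro N.
  assert (E : / a * (a * a * hs_inner p p - 2 * a * hs_inner p q + hs_inner q q) =
     a * hs_inner p p - 2 * hs_inner p q + / a * hs_inner q q) by (field; lra).
  assert (0 <= / a * (a * a * hs_inner p p - 2 * a * hs_inner p q + hs_inner q q)).
  { apply Rmult_le_pos. left; apply Rinv_0_lt_compat; lra. nra. }
  lra.
Qed.

Lemma cs_low {X : HilbertSpace} (a : R) (p q : X) : 0 < a ->
  - hs_inner p q <= (a * hs_inner p p + / a * hs_inner q q) / 2.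
Proof.
  intro Ha. pose proof (cs_up a p (hs_opp q) Ha) as C. revert C. hexp. lra.
Qed.

Fixpoint ssum (g : nat -> R) (a len : nat) : R :=
  match len with O => 0 | S l => ssum g a l + g (a + l)%nat end.

Lemma ssum_le (g h : nat -> R) a L : (forall i, (i < L)%nat -> g (a + i)%nat <= h (a + i)%nat) ->
  ssum g a L <= ssum h a L.
Proof.
  induction L; simpl; intros Hi. lra.
  assert (ssum g a L <= ssum h a L) by (apply IHL; intros; apply Hi; lia).
  specialize (Hi L ltac:(lia)). lra.
Qed.

Lemma ssum_add (g h : nat -> R) a L : ssum (fun k => g k + h k) a L = ssum g a L + ssum h a L.
Proof. induction L; simpl; lra. Qed.

Lemma ssum_mul (g : nat -> R) c a L : ssum (fun k => c * g k) a L = c * ssum g a L.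
Proof. induction L; simpl. ring. rewrite IHL. ring. Qed.

Lemma ssum_ext (g h : nat -> R) a L : (forall i, (i < L)%nat -> g (a + i)%nat = h (a + i)%nat) ->
  ssum g a L = ssum h a L.
Proof.
  induction L; simpl; intros Hi. reflexivity.
  rewrite IHL by (intros; apply Hi; lia). rewrite Hi by lia. reflexivity.
Qed.

Lemma ssum_nonneg (g : nat -> R) a L : (forall i, (i < L)%nat -> 0 <= g (a + i)%nat) -> 0 <= ssum g a L.
Proof.
  induction L; simpl; intros Hi. lra.
  assert (0 <= ssum g a L) by (apply IHL; intros; apply Hi; lia).
  specialize (Hi L ltac:(lia)). lra.
Qed.

Lemma ssum_const (g : nat -> R) c a L : (forall i, (i < L)%nat -> c <= g (a + i)%nat) ->
  INR L * c <= ssum g a L.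
Proof.
  induction L; intros Hi. simpl; lra.
  change (ssum g a (S L)) with (ssum g a L + g (a + L)%nat).
  assert (INR L * c <= ssum g a L) by (apply IHL; intros; apply Hi; lia).
  specialize (Hi L ltac:(lia)). rewrite S_INR. lra.
Qed.

Lemma ssum_tele (h : nat -> R) a L : ssum (fun k => h k - h (S k)) a L = h a - h (a + L)%nat.
Proof.
  induction L; simpl. rewrite Nat.add_0_r. lra.
  rewrite IHL. replace (a + S L)%nat with (S (a + L)) by lia. lra.
Qed.

Lemma ssum_first (g : nat -> R) a L : ssum g a (S L) = g a + ssum g (S a) L.
Proof.
  induction L. simpl. rewrite Nat.add_0_r. lra.
  change (ssum g a (S (S L))) with (ssum g a (S L) + g (a + S L)%nat).
  rewrite IHL. simpl. replace (a + S L)%nat with (S (a + L)) by lia. lra.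
Qed.

Lemma sum_f_ssum (h : nat -> R) N : sum_f_R0 h N = ssum h 0 (S N).
Proof. induction N; simpl. lra. rewrite IHN. simpl. reflexivity. Qed.

Lemma ssum_shift (g : nat -> R) a L : ssum g a L = ssum (fun i => g (a + i)%nat) 0 L.
Proof. induction L; simpl; auto. rewrite IHL. reflexivity. Qed.

Lemma sum_range_ssum m n g : (m <= n)%nat -> sum_range m n g = g m + ssum g (S m) (n - m).
Proof.
  intro. unfold sum_range. rewrite sum_f_ssum, <- ssum_shift.
  replace (S (n - m)) with (S (n - m)) by reflexivity. apply ssum_first.
Qed.

Lemma ssum_constf c a L : ssum (fun _ => c) a L = INR L * c.
Proof. induction L. simpl; ring. change (ssum (fun _ => c) a (S L)) with (ssum (fun _ => c) a L + c).
  rewrite IHL, S_INR. ring. Qed.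

Lemma ssum_S (g : nat -> R) a L : ssum (fun k => g (S k)) a L = ssum g (S a) L.
Proof. induction L; simpl; auto. rewrite IHL. reflexivity. Qed.

Lemma stop_fail (r1 r2 t d Nr Ns : R) : 0 < r1 -> 0 < r2 -> 0 <= Nr -> 0 <= Ns ->
  ~ (r1 ^ 2 * Nr + r2 ^ 2 * Ns <= Rmax (r1 ^ 2) (r2 ^ 2) * t ^ 2 * d ^ 2) ->
  r1 * (t ^ 2 * d ^ 2) < r1 * Nr + r2 * Ns.
Proof.
  intros H1 H2 H3 H4 Hn. apply Rnot_le_lt in Hn.
  assert (0 <= t ^ 2 * d ^ 2) by (apply Rmult_le_pos; apply pow2_ge_0).
  set (T := t ^ 2 * d ^ 2) in *.
  unfold Rmax in Hn. destruct (Rle_dec (r1 ^ 2) (r2 ^ 2)) as [Hle|Hlt].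
  - assert (Hr : r1 <= r2) by (destruct (Rle_or_lt r1 r2); auto; nra).
    assert (E : r2 ^ 2 * T < r1 ^ 2 * Nr + r2 ^ 2 * Ns) by (unfold T; lra).
    assert (r1 * (r2 ^ 2 * T) < r1 * (r1 ^ 2 * Nr + r2 ^ 2 * Ns)) by (apply Rmult_lt_compat_l; auto).
    assert (r1 ^ 2 * Nr <= r2 ^ 2 * Nr) by (apply Rmult_le_compat_r; auto).
    assert (r1 * (r2 ^2 * Ns) <= r2 * (r2 ^ 2 * Ns)) by (apply Rmult_le_compat_r; auto; apply Rmult_le_pos; auto; apply pow2_ge_0).
    assert (r1 * (r1 ^ 2 * Nr) <= r1 * (r2 ^ 2 * Nr)) by (apply Rmult_le_compat_l; lra).
    assert (r2 ^ 2 * (r1 * T) < r2 ^ 2 * (r1 * Nr + r2 * Ns)) by nra.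
    apply Rmult_lt_reg_l with (r2 ^ 2); auto. nra.
  - assert (Hr : r2 < r1) by (destruct (Rle_or_lt r1 r2); auto; nra).
    assert (E : r1 ^ 2 * T < r1 ^ 2 * Nr + r2 ^ 2 * Ns) by (unfold T; lra).
    assert (r2 * (r2 * Ns) <= r1 * (r2 * Ns)) by (apply Rmult_le_compat_r; nra).
    apply Rmult_lt_reg_l with r1; auto. nra.
Qed.

Lemma delta_bound (r1 r2 t d Nr Ns Ne P : R) : 0 < r1 -> 0 < r2 -> 1 < t -> 0 < d ->
  0 <= Nr -> 0 <= Ns -> Ne <= d ^ 2 ->
  0 <= (/ t) * (/ t) * Nr + 2 * (/ t) * P + Ne ->
  ~ (r1 ^ 2 * Nr + r2 ^ 2 * Ns <= Rmax (r1 ^ 2) (r2 ^ 2) * t ^ 2 * d ^ 2) ->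
  - (r1 * P) <= / t * (r1 * Nr) + / (2 * t) * (r2 * Ns).
Proof.
  intros H1 H2 Ht Hd HNr HNs HNe Hq Hn.
  pose proof (stop_fail r1 r2 t d Nr Ns H1 H2 HNr HNs Hn) as S.
  assert (Hp : - P <= Nr / (2 * t) + t * d ^ 2 / 2).
  { apply Rmult_le_reg_l with (2 * / t). apply Rmult_lt_0_compat; [lra|apply Rinv_0_lt_compat; lra].
    replace (2 * / t * (Nr / (2 * t) + t * d ^ 2 / 2)) with (/ t * / t * Nr + d ^ 2) by (field; lra).
    lra. }
  assert (- (r1 * P) <= r1 * (Nr / (2 * t)) + r1 * t * d ^ 2 / 2) by nra.
  assert (Ek : r1 * t * d ^ 2 / 2 = / (2 * t) * (r1 * (t ^ 2 * d ^ 2))) by (field; lra).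
  assert (/ (2 * t) * (r1 * (t ^ 2 * d ^ 2)) <= / (2 * t) * (r1 * Nr + r2 * Ns)).
  { apply Rmult_le_compat_l. left; apply Rinv_0_lt_compat; lra. lra. }
  assert (r1 * (Nr / (2 * t)) + / (2 * t) * (r1 * Nr + r2 * Ns) = / t * (r1 * Nr) + / (2 * t) * (r2 * Ns))
    by (field; lra).
  lra.
Qed.

Section ADMM.
Context (X Y H : HilbertSpace) (A : X -> H) (D : X -> Prop) (W : X -> Y)
  (domf : Y -> Prop) (f : Y -> R) (c0 rho1 rho2 : R) (bd : H)
  (x : nat -> X) (y : nat -> Y) (lam : nat -> H) (mu : nat -> Y).
Hypothesis HA : bounded_linear A.
Hypothesis HW : densely_defined_closed D W.
Hypothesis Hsc : strongly_convex domf f c0.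
Hypothesis Hc0 : 0 < c0.
Hypothesis Hr1 : 0 < rho1.
Hypothesis Hr2 : 0 < rho2.
Hypothesis Hadmm : noisy_admm A D W domf f rho1 rho2 bd x y lam mu.

Lemma A_add u v : A (hs_add u v) = hs_add (A u) (A v).
Proof. destruct HA as [h _]. apply h. Qed.
Lemma A_scal a u : A (hs_scal a u) = hs_scal a (A u).
Proof. destruct HA as [_ [h _]]. apply h. Qed.
Lemma A_sub u v : A (hsub u v) = hsub (A u) (A v).
Proof. unfold hsub. rewrite !opp_scal, A_add, A_scal. reflexivity. Qed.

Lemma D_add u v : D u -> D v -> D (hs_add u v).
Proof. destruct HW as [_ [h _]]. apply h. Qed.
Lemma D_scal a u : D u -> D (hs_scal a u).
Proof. destruct HW as [_ [_ [h _]]]. apply h. Qed.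
Lemma D_sub u v : D u -> D v -> D (hsub u v).
Proof. intros. unfold hsub. rewrite opp_scal. apply D_add; auto. apply D_scal; auto. Qed.
Lemma W_add u v : D u -> D v -> W (hs_add u v) = hs_add (W u) (W v).
Proof. destruct HW as [_ [_ [_ [h _]]]]. apply h. Qed.
Lemma W_scal a u : D u -> W (hs_scal a u) = hs_scal a (W u).
Proof. destruct HW as [_ [_ [_ [_ [h _]]]]]. apply h. Qed.
Lemma W_sub u v : D u -> D v -> W (hsub u v) = hsub (W u) (W v).
Proof.
  intros. unfold hsub. rewrite !opp_scal, W_add, W_scal; auto. apply D_scal; auto.
Qed.

Lemma Dx k : D (x (S k)).
Proof. apply (Hadmm k). Qed.
Lemma Dy k : domf (y (S k)).
Proof. apply (Hadmm k). Qed.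
Lemma lam_rec k : lam (S k) = hs_add (lam k) (hs_scal rho1 (hsub (A (x (S k))) bd)).
Proof. apply (Hadmm k). Qed.
Lemma mu_rec k : mu (S k) = hs_add (mu k) (hs_scal rho2 (hsub (W (x (S k))) (y (S k)))).
Proof. apply (Hadmm k). Qed.

Lemma F1 k z : D z ->
  hs_inner (lam (S k)) (A z) + hs_inner (mu (S k)) (W z)
  + rho2 * hs_inner (hsub (y (S k)) (y k)) (W z) = 0.
Proof.
  intro Hz. destruct (Hadmm k) as [[Dx1 Hmin] _].
  assert (Q : forall t, 0 <= (hs_inner (lam k) (A z) + hs_inner (mu k) (W z)
     + rho1 * hs_inner (hsub (A (x (S k))) bd) (A z)
     + rho2 * hs_inner (hsub (W (x (S k))) (y k)) (W z)) * t
     + (rho1 / 2 * hs_inner (A z) (A z) + rho2 / 2 * hs_inner (W z) (W z)) * (t * t)).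
  { intro t. specialize (Hmin (hs_add (x (S k)) (hs_scal t z)) (D_add _ _ Dx1 (D_scal t z Hz))).
    rewrite A_add, A_scal, W_add, W_scal in Hmin by (auto; apply D_scal; auto).
    rewrite !hnorm_sq in Hmin. revert Hmin. hexp. hsym. intro. lra. }
  apply quad0 in Q. rewrite lam_rec, mu_rec. revert Q. hexp. hsym. intro. lra.
Qed.

Lemma F2 k z : domf z ->
  f (y (S k)) + hs_inner (mu (S k)) (hsub z (y (S k)))
  + c0 * hs_inner (hsub z (y (S k))) (hsub z (y (S k))) <= f z.
Proof.
  intro Hz. destruct (Hadmm k) as [_ [[Dy1 Hymin] _]].
  assert (Q : forall t, 0 < t <= 1 ->
    0 <= (f z - f (y (S k)) - hs_inner (mu (S k)) (hsub z (y (S k)))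
          - c0 * hs_inner (hsub z (y (S k))) (hsub z (y (S k))))
         + t * ((c0 + rho2 / 2) * hs_inner (hsub z (y (S k))) (hsub z (y (S k))))).
  { intros t Ht. destruct (Hsc z (y (S k)) t Hz Dy1 ltac:(lra)) as [Dzt Hconv].
    specialize (Hymin _ Dzt). rewrite !hnorm_sq in *.
    apply (Rmult_le_reg_l t); [lra|]. rewrite Rmult_0_r.
    rewrite mu_rec. revert Hconv Hymin. hexp. hsym. intros. lra. }
  apply small_t in Q. lra.
Qed.


Definition rr k := hsub (A (x k)) bd.
Definition ss k := hsub (W (x k)) (y k).
Definition uu k := hsub (y k) (y (k - 1)%nat).
Definition EE k := Ek A W rho1 rho2 bd x y k.

Lemma EE_eq k : EE k = rho1 * hs_inner (rr k) (rr k) + rho2 * hs_inner (ss k) (ss k)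
   + rho2 * hs_inner (uu k) (uu k).
Proof. unfold EE, Ek, rr, ss, uu. rewrite !hnorm_sq. reflexivity. Qed.

Lemma Sm1 k : (S k - 1)%nat = k.
Proof. lia. Qed.

Lemma mono j :
  EE (S (S j)) + 4 * c0 * hs_inner (uu (S (S j))) (uu (S (S j)))
  + rho2 * hs_inner (hsub (hs_add (ss (S (S j))) (uu (S (S j)))) (hs_add (ss (S j)) (uu (S j))))
                    (hsub (hs_add (ss (S (S j))) (uu (S (S j)))) (hs_add (ss (S j)) (uu (S j))))
  <= EE (S j).
Proof.
  rewrite !EE_eq.
  pose proof (F1 (S j) (hsub (x (S (S j))) (x (S j))) (D_sub _ _ (Dx _) (Dx _))) as G1.
  pose proof (F1 j (hsub (x (S (S j))) (x (S j))) (D_sub _ _ (Dx _) (Dx _))) as G0.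
  pose proof (F2 (S j) (y (S j)) (Dy j)) as K1.
  pose proof (F2 j (y (S (S j))) (Dy (S j))) as K0.
  assert (P : 0 <= rho1 * hs_inner (hsub (rr (S (S j))) (rr (S j))) (hsub (rr (S (S j))) (rr (S j)))).
  { apply Rmult_le_pos. lra. apply hs_inner_nonneg. }
  assert (P2 : 0 <= c0 * hs_inner (uu (S (S j))) (uu (S (S j)))).
  { apply Rmult_le_pos. lra. apply hs_inner_nonneg. }
  rewrite A_sub in G1, G0. rewrite W_sub in G1, G0 by apply Dx.
  rewrite lam_rec, mu_rec in G1. rewrite mu_rec in K1.
  unfold rr, ss, uu in *. rewrite !Sm1 in *.
  revert G1 G0 K1 K0 P P2. hexp. hsym. intros. lra.
Qed.


Definition vv (xh : X) k := hsub (W xh) (W (x k)).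

Lemma step0 j (xh : X) (yh : Y) (b : H) :
  D xh -> domf yh -> A xh = b -> W xh = yh ->
  bregman f (mu (S (S j))) yh (y (S (S j))) - bregman f (mu (S j)) yh (y (S j))
  <= - (c0 * hs_inner (uu (S (S j))) (uu (S (S j))))
     - rho1 * hs_inner (rr (S (S j))) (rr (S (S j)))
     - rho2 * hs_inner (ss (S (S j))) (ss (S (S j)))
     - rho1 * hs_inner (rr (S (S j))) (hsub bd b)
     + rho2 * hs_inner (hsub (uu (S (S j))) (uu (S j))) (vv xh (S (S j))).
Proof.
  intros Dh Fh Ab Wb.
  pose proof (F1 (S j) (hsub (x (S (S j))) xh) (D_sub _ _ (Dx _) Dh)) as G1.
  pose proof (F1 j (hsub (x (S (S j))) xh) (D_sub _ _ (Dx _) Dh)) as G0.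
  pose proof (F2 j (y (S (S j))) (Dy (S j))) as K0.
  rewrite A_sub in G1, G0. rewrite W_sub in G1, G0 by (auto; apply Dx).
  rewrite lam_rec, mu_rec in G1. unfold bregman. rewrite mu_rec.
  unfold vv, rr, ss, uu in *. rewrite !Sm1 in *. rewrite Ab, Wb in *.
  revert G1 G0 K0. hexp. hsym. intros. lra.
Qed.


Definition ccst (tau : R) := (1 - / tau) * (c0 / (c0 + rho2)).

Lemma ccst_props tau : 1 < tau ->
  0 < ccst tau /\ ccst tau <= 1 - / tau /\ ccst tau * rho2 <= c0.
Proof.
  intro Ht. unfold ccst.
  assert (0 < / tau < 1) by (split; [apply Rinv_0_lt_compat; lra| rewrite <- Rinv_1; apply Rinv_1_lt_contravar; lra]).
  assert (Hq : 0 < c0 / (c0 + rho2)) by (apply Rdiv_lt_0_compat; lra).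
  assert (Hq1 : c0 / (c0 + rho2) <= 1).
  { apply Rmult_le_reg_r with (c0 + rho2). lra. unfold Rdiv. rewrite Rmult_assoc, Rinv_l; lra. }
  assert (Hq2 : c0 / (c0 + rho2) * rho2 <= c0).
  { apply Rmult_le_reg_r with (c0 + rho2). lra.
    replace (c0 / (c0 + rho2) * rho2 * (c0 + rho2)) with (c0 * rho2) by (field; lra). nra. }
  split; [|split]; nra.
Qed.

Lemma step1 j (xh : X) (yh : Y) (b : H) tau delta :
  D xh -> domf yh -> A xh = b -> W xh = yh -> 1 < tau -> 0 < delta ->
  hnorm (hsub bd b) <= delta ->
  ~ stop_crit A W rho1 rho2 tau delta bd x y (S (S j)) ->
  bregman f (mu (S (S j))) yh (y (S (S j))) - bregman f (mu (S j)) yh (y (S j))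
  + ccst tau * EE (S (S j))
  <= rho2 * hs_inner (hsub (uu (S (S j))) (uu (S j))) (vv xh (S (S j))).
Proof.
  intros Dh Fh Ab Wb Ht Hd Hn Hs.
  pose proof (step0 j xh yh b Dh Fh Ab Wb) as S0.
  assert (HNe : hs_inner (hsub bd b) (hsub bd b) <= delta ^ 2).
  { rewrite <- hnorm_sq. apply pow_incr. split; auto. unfold hnorm; apply sqrt_pos. }
  pose proof (hs_inner_nonneg H (hs_add (hs_scal (/ tau) (rr (S (S j)))) (hsub bd b))) as Q.
  assert (Q' : 0 <= / tau * / tau * hs_inner (rr (S (S j))) (rr (S (S j)))
      + 2 * / tau * hs_inner (rr (S (S j))) (hsub bd b) + hs_inner (hsub bd b) (hsub bd b)).
  { revert Q. unfold rr. hexp. hsym. intro. lra. }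
  unfold stop_crit in Hs. rewrite !hnorm_sq in Hs.
  pose proof (delta_bound rho1 rho2 tau delta _ _ _ _ Hr1 Hr2 Ht Hd
    (hs_inner_nonneg _ (rr (S (S j)))) (hs_inner_nonneg _ (ss (S (S j)))) HNe Q' Hs) as DB.
  destruct (ccst_props tau Ht) as [C1 [C2 C3]].
  rewrite EE_eq.
  set (Nr := hs_inner (rr (S (S j))) (rr (S (S j)))) in *.
  set (Ns := hs_inner (ss (S (S j))) (ss (S (S j)))) in *.
  set (Nu := hs_inner (uu (S (S j))) (uu (S (S j)))) in *.
  assert (0 <= Nr) by apply hs_inner_nonneg.
  assert (0 <= Ns) by apply hs_inner_nonneg.
  assert (0 <= Nu) by apply hs_inner_nonneg.
  assert (0 < / tau < 1) by (split; [apply Rinv_0_lt_compat; lra| rewrite <- Rinv_1; apply Rinv_1_lt_contravar; lra]).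
  assert (/ (2 * tau) = / tau / 2) by (field; lra).
  assert (0 <= (1 - / tau - ccst tau) * (rho1 * Nr)) by (apply Rmult_le_pos; nra).
  assert (0 <= (1 - / tau - ccst tau) * (rho2 * Ns)) by (apply Rmult_le_pos; nra).
  assert (0 <= (/ tau / 2) * (rho2 * Ns)) by (apply Rmult_le_pos; nra).
  assert (0 <= (c0 - ccst tau * rho2) * Nu) by (apply Rmult_le_pos; nra).
  unfold rr, ss in DB. fold (rr (S (S j))) (ss (S (S j))) in DB. fold Nr Ns in DB.
  nra.
Qed.


Definition Bg (yh : Y) k := bregman f (mu k) yh (y k).
Definition Qf (xh : X) k := rho2 * hs_inner (uu k) (vv xh k).
Definition Qp (xh : X) k := rho2 * hs_inner (uu k) (vv xh (S k)).
Definition ww (xh : X) k := hsub (vv xh k) (vv xh (S k)).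
Definition Zf (xh : X) k := rho2 * hs_inner (uu k) (ww xh k).

Lemma lyap p L (xh : X) (yh : Y) (b : H) tau delta :
  D xh -> domf yh -> A xh = b -> W xh = yh -> 1 < tau -> 0 < delta ->
  hnorm (hsub bd b) <= delta ->
  (forall l, (l <= L)%nat -> ~ stop_crit A W rho1 rho2 tau delta bd x y (S (S (p + l)))) ->
  Bg yh (S (S (p + L))) - Qf xh (S (S (p + L))) + ccst tau * ssum EE (S (S p)) (S L)
  <= Bg yh (S p) - Qp xh (S p) + ssum (Zf xh) (S (S p)) L.
Proof.
  intros Dh Fh Ab Wb Ht Hd Hn Hst. induction L.
  - pose proof (Hst O (le_n O)) as H0. rewrite Nat.add_0_r in *.
    pose proof (step1 p xh yh b tau delta Dh Fh Ab Wb Ht Hd Hn H0) as S1.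
    simpl ssum. rewrite Nat.add_0_r. unfold Bg, Qf, Qp in *. revert S1. hexp. intro. lra.
  - assert (IH := IHL (fun l Hl => Hst l ltac:(lia))).
    pose proof (Hst (S L) (le_n _)) as H0. rewrite Nat.add_succ_r in H0.
    pose proof (step1 (S (p + L)) xh yh b tau delta Dh Fh Ab Wb Ht Hd Hn H0) as S1.
    rewrite Nat.add_succ_r.
    change (ssum EE (S (S p)) (S (S L))) with (ssum EE (S (S p)) (S L) + EE (S (S p) + S L)%nat).
    change (ssum (Zf xh) (S (S p)) (S L)) with (ssum (Zf xh) (S (S p)) L + Zf xh (S (S p) + L)%nat).
    replace (S (S p) + S L)%nat with (S (S (S (p + L)))) by lia.
    replace (S (S p) + L)%nat with (S (S (p + L))) by lia.
    unfold Bg, Qf, Qp, Zf, ww in *. revert S1 IH. hexp. intros. lra.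
Qed.


Lemma EE_nonneg k : 0 <= EE k.
Proof.
  rewrite EE_eq. pose proof (hs_inner_nonneg _ (rr k)). pose proof (hs_inner_nonneg _ (ss k)).
  pose proof (hs_inner_nonneg _ (uu k)).
  assert (0 <= rho1 * hs_inner (rr k) (rr k)) by (apply Rmult_le_pos; lra).
  assert (0 <= rho2 * hs_inner (ss k) (ss k)) by (apply Rmult_le_pos; lra).
  assert (0 <= rho2 * hs_inner (uu k) (uu k)) by (apply Rmult_le_pos; lra).
  lra.
Qed.

Definition dd k := hsub (hs_add (ss (S k)) (uu (S k))) (hs_add (ss k) (uu k)).

Lemma mono' j : EE (S (S j)) + 4 * c0 * hs_inner (uu (S (S j))) (uu (S (S j)))
  + rho2 * hs_inner (dd (S j)) (dd (S j)) <= EE (S j).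
Proof. apply mono. Qed.

Lemma EE_anti i d : EE (S i + d)%nat <= EE (S i).
Proof.
  induction d. rewrite Nat.add_0_r; lra.
  pose proof (mono' (i + d)). replace (S i + S d)%nat with (S (S (i + d))) by lia.
  replace (S i + d)%nat with (S (i + d)) in IHd by lia.
  pose proof (hs_inner_nonneg _ (uu (S (S (i + d))))).
  pose proof (hs_inner_nonneg _ (dd (S (i + d)))).
  assert (0 <= 4 * c0 * hs_inner (uu (S (S (i + d)))) (uu (S (S (i + d))))) by (apply Rmult_le_pos; lra).
  assert (0 <= rho2 * hs_inner (dd (S (i + d))) (dd (S (i + d)))) by (apply Rmult_le_pos; lra).
  lra.
Qed.

Lemma ww_bound (xh : X) k : hs_inner (ww xh k) (ww xh k)
   <= 2 * hs_inner (dd k) (dd k) + 2 * hs_inner (uu k) (uu k).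
Proof.
  pose proof (hs_inner_nonneg _ (hsub (dd k) (uu k))) as P.
  unfold ww, vv, dd, ss, uu in *. rewrite Sm1 in *. revert P. hexp. hsym. intro. lra.
Qed.

Lemma mono_tele p L :
  ssum (fun k => 4 * c0 * hs_inner (uu (S k)) (uu (S k)) + rho2 * hs_inner (dd k) (dd k)) (S p) L
  <= EE (S p) - EE (S p + L)%nat.
Proof.
  rewrite <- ssum_tele. apply ssum_le. intros i Hi.
  pose proof (mono' (p + i)). replace (S p + i)%nat with (S (p + i)) by lia. lra.
Qed.


Definition Kst tau := 1 / 2 + (/ ccst tau / 2 + 1 / 2) * (4 + 2 * (rho2 / (4 * c0)))
   + rho2 / (4 * c0) / 2.
Definition Cst tau := rho2 / 2 + Kst tau + ccst tau / 2.

Lemma Kst_pos tau : 1 < tau -> 0 < Kst tau.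
Proof.
  intro Ht. destruct (ccst_props tau Ht) as [C1 _]. unfold Kst.
  assert (0 < / ccst tau) by (apply Rinv_0_lt_compat; auto).
  assert (0 < rho2 / (4 * c0)) by (apply Rdiv_lt_0_compat; lra).
  nra.
Qed.

Lemma main_ineq p L (xh : X) (yh : Y) (b : H) tau delta :
  D xh -> domf yh -> A xh = b -> W xh = yh -> 1 < tau -> 0 < delta ->
  hnorm (hsub bd b) <= delta ->
  (forall l, (l <= L)%nat -> ~ stop_crit A W rho1 rho2 tau delta bd x y (S (S (p + l)))) ->
  Bg yh (S (S (p + L))) + ccst tau / 2 * (EE (S p) + ssum EE (S (S p)) (S L))
  <= Bg yh (S p) - Qp xh (S p) + Cst tau * (hs_inner (vv xh (S p)) (vv xh (S p))
        + hs_inner (ss (S p)) (ss (S p)) + EE (S p)).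
Proof.
  intros Dh Fh Ab Wb Ht Hd Hn Hst.
  pose proof (lyap p L xh yh b tau delta Dh Fh Ab Wb Ht Hd Hn Hst) as Ly.
  destruct (ccst_props tau Ht) as [C1 _].
  pose proof (Kst_pos tau Ht) as K1.
  set (n := S (S (p + L))) in *.
  set (cc := ccst tau) in *.
  pose proof (ssum_tele (fun k => rho2 * hs_inner (uu n) (vv xh k)) (S p) (S L)) as Te.
  cbv beta in Te.
  assert (Te2 : ssum (fun k => rho2 * hs_inner (uu n) (vv xh k) - rho2 * hs_inner (uu n) (vv xh (S k))) (S p) (S L)
     = ssum (fun k => rho2 * hs_inner (uu n) (ww xh k)) (S p) (S L)).
  { apply ssum_ext. intros. unfold ww. hexp. lra. }
  replace (S p + S L)%nat with n in Te by (unfold n; lia).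
  set (T := ssum (fun k => rho2 * hs_inner (uu n) (ww xh k)) (S p) (S L)) in *.
  set (Sw := ssum (fun k => rho2 * hs_inner (ww xh k) (ww xh k)) (S p) (S L)).
  set (a := rho2 * hs_inner (uu n) (uu n)).
  assert (T3 : - T <= INR (S L) * (cc * a / 2) + / cc / 2 * Sw).
  { assert (E1 : - T = ssum (fun k => -1 * (rho2 * hs_inner (uu n) (ww xh k))) (S p) (S L))
      by (unfold T; rewrite (ssum_mul _ (-1)); ring).
    assert (E2 : INR (S L) * (cc * a / 2) + / cc / 2 * Sw =
       ssum (fun k => cc * a / 2 + / cc / 2 * (rho2 * hs_inner (ww xh k) (ww xh k))) (S p) (S L))
      by (rewrite ssum_add, ssum_constf, ssum_mul; reflexivity).
    rewrite E1, E2. apply ssum_le. intros i _. pose proof (cs_low cc (uu n) (ww xh (S p + i)) C1) as Cl.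
    assert (Hm : rho2 * - hs_inner (uu n) (ww xh (S p + i)) <=
       rho2 * ((cc * hs_inner (uu n) (uu n) + / cc * hs_inner (ww xh (S p + i)) (ww xh (S p + i))) / 2))
      by (apply Rmult_le_compat_l; lra).
    unfold a. lra. }
  assert (Ha : a <= EE n).
  { unfold a. rewrite EE_eq. pose proof (hs_inner_nonneg _ (rr n)). pose proof (hs_inner_nonneg _ (ss n)).
    assert (0 <= rho1 * hs_inner (rr n) (rr n)) by (apply Rmult_le_pos; lra).
    assert (0 <= rho2 * hs_inner (ss n) (ss n)) by (apply Rmult_le_pos; lra). lra. }
  assert (T4 : INR (S L) * a <= ssum EE (S (S p)) (S L)).
  { apply ssum_const. intros i Hi. pose proof (EE_anti (S p + i) (L - i)) as Ea.
    replace (S (S p + i) + (L - i))%nat with n in Ea by (unfold n; lia).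
    replace (S (S p) + i)%nat with (S (S p + i)) by lia. lra. }
  assert (T4' : INR (S L) * (cc * a / 2) <= cc / 2 * ssum EE (S (S p)) (S L)).
  { replace (INR (S L) * (cc * a / 2)) with (cc / 2 * (INR (S L) * a)) by lra.
    apply Rmult_le_compat_l; lra. }
  assert (T5 : rho2 * hs_inner (uu n) (vv xh (S p)) <= (a + rho2 * hs_inner (vv xh (S p)) (vv xh (S p))) / 2).
  { pose proof (cs_up 1 (uu n) (vv xh (S p)) ltac:(lra)) as Cu. rewrite Rinv_1 in Cu.
    unfold a. apply Rmult_le_compat_l with (r := rho2) in Cu; lra. }
  assert (Ean : EE n <= EE (S p)).
  { pose proof (EE_anti p (S L)). replace (S p + S L)%nat with n in * by (unfold n; lia). lra. }
  set (Su' := ssum (fun k => rho2 * hs_inner (uu k) (uu k)) (S (S p)) L).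
  set (Sw' := ssum (fun k => rho2 * hs_inner (ww xh k) (ww xh k)) (S (S p)) L).
  assert (T6 : ssum (Zf xh) (S (S p)) L <= / 2 * Su' + / 2 * Sw').
  { unfold Su', Sw'. rewrite <- !ssum_mul, <- ssum_add. apply ssum_le. intros i _.
    pose proof (cs_up 1 (uu (S (S p) + i)) (ww xh (S (S p) + i)) ltac:(lra)) as Cu. rewrite Rinv_1 in Cu.
    unfold Zf. apply Rmult_le_compat_l with (r := rho2) in Cu; lra. }
  assert (T7 : Sw' <= Sw).
  { unfold Sw, Sw'. rewrite ssum_first. pose proof (hs_inner_nonneg _ (ww xh (S p))).
    assert (0 <= rho2 * hs_inner (ww xh (S p)) (ww xh (S p))) by (apply Rmult_le_pos; lra). lra. }
  set (Dd := ssum (fun k => rho2 * hs_inner (dd k) (dd k)) (S p) (S L)).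
  set (Suf := ssum (fun k => rho2 * hs_inner (uu k) (uu k)) (S p) (S L)).
  assert (T8 : Sw <= 2 * Dd + 2 * Suf).
  { unfold Sw, Dd, Suf. rewrite <- !ssum_mul, <- ssum_add. apply ssum_le. intros i _.
    pose proof (ww_bound xh (S p + i)) as Wb'.
    apply Rmult_le_compat_l with (r := rho2) in Wb'; lra. }
  assert (T9 : Suf <= EE (S p) + Su').
  { unfold Suf, Su'. rewrite ssum_first. rewrite EE_eq.
    pose proof (hs_inner_nonneg _ (rr (S p))). pose proof (hs_inner_nonneg _ (ss (S p))).
    assert (0 <= rho1 * hs_inner (rr (S p)) (rr (S p))) by (apply Rmult_le_pos; lra).
    assert (0 <= rho2 * hs_inner (ss (S p)) (ss (S p))) by (apply Rmult_le_pos; lra). lra. }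
  set (U0 := ssum (fun k => hs_inner (uu (S k)) (uu (S k))) (S p) (S L)).
  assert (T10 : Su' <= rho2 * U0).
  { unfold Su', U0. rewrite ssum_mul. apply Rmult_le_compat_l. lra.
    rewrite (ssum_S (fun k => hs_inner (uu k) (uu k))).
    change (ssum (fun k => hs_inner (uu k) (uu k)) (S (S p)) (S L)) with
      (ssum (fun k => hs_inner (uu k) (uu k)) (S (S p)) L + hs_inner (uu (S (S p) + L)%nat) (uu (S (S p) + L)%nat)).
    pose proof (hs_inner_nonneg _ (uu (S (S p) + L)%nat)). lra. }
  assert (T11 : 4 * c0 * U0 + Dd <= EE (S p)).
  { pose proof (mono_tele p (S L)) as Mt. rewrite ssum_add, !ssum_mul in Mt.
    pose proof (EE_nonneg (S p + S L)). unfold U0, Dd. rewrite ssum_mul. lra. }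
  assert (U0p : 0 <= U0) by (apply ssum_nonneg; intros; apply hs_inner_nonneg).
  set (Rr := rho2 / (4 * c0)).
  assert (Rp : 0 < Rr) by (apply Rdiv_lt_0_compat; lra).
  assert (RU : rho2 * U0 <= Rr * EE (S p)).
  { replace (rho2 * U0) with (Rr * (4 * c0 * U0)) by (unfold Rr; field; lra).
    apply Rmult_le_compat_l; [lra|].
    assert (0 <= Dd) by (apply ssum_nonneg; intros; apply Rmult_le_pos; [lra|apply hs_inner_nonneg]).
    lra. }
  assert (SwB : Sw <= (4 + 2 * Rr) * EE (S p)).
  { assert (0 <= Dd) by (apply ssum_nonneg; intros; apply Rmult_le_pos; [lra|apply hs_inner_nonneg]).
    assert (0 <= 4 * c0 * U0) by (apply Rmult_le_pos; lra). lra. }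
  assert (SwB' : / cc / 2 * Sw <= / cc / 2 * ((4 + 2 * Rr) * EE (S p))).
  { apply Rmult_le_compat_l; auto. assert (0 < / cc) by (apply Rinv_0_lt_compat; auto). lra. }
  pose proof (EE_nonneg (S p)) as Em0.
  pose proof (hs_inner_nonneg _ (vv xh (S p))) as Nv0.
  pose proof (hs_inner_nonneg _ (ss (S p))) as Ns0.
  assert (Qn : Qf xh n = rho2 * hs_inner (uu n) (vv xh (S p)) - T) by (unfold Qf; lra).
  assert (Kd : Kst tau = 1 / 2 + (/ cc / 2 + 1 / 2) * (4 + 2 * Rr) + Rr / 2) by reflexivity.
  assert (F1' : 0 <= (Cst tau - rho2 / 2) * hs_inner (vv xh (S p)) (vv xh (S p)))
    by (apply Rmult_le_pos; unfold Cst; fold cc; lra).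
  assert (F2' : 0 <= Cst tau * hs_inner (ss (S p)) (ss (S p)))
    by (apply Rmult_le_pos; unfold Cst; fold cc; lra).
  assert (F3' : 0 <= (Cst tau - Kst tau - cc / 2) * EE (S p))
    by (apply Rmult_le_pos; unfold Cst; fold cc; lra).
  assert (Kexp : Kst tau * EE (S p) = 1 / 2 * EE (S p) + / cc / 2 * ((4 + 2 * Rr) * EE (S p))
        + 1 / 2 * ((4 + 2 * Rr) * EE (S p)) + Rr / 2 * EE (S p)) by (rewrite Kd; ring).
  assert (RU2 : / 2 * Su' <= Rr / 2 * EE (S p)) by lra.
  nra.
Qed.


Lemma Bg_nonneg (yh : Y) k : domf yh -> 0 <= Bg yh (S k).
Proof.
  intro Fh. pose proof (F2 k yh Fh) as K. unfold Bg, bregman.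
  pose proof (hs_inner_nonneg _ (hsub yh (y (S k)))).
  assert (0 <= c0 * hs_inner (hsub yh (y (S k))) (hsub yh (y (S k)))) by (apply Rmult_le_pos; lra).
  lra.
Qed.

Lemma part2 tau delta (b : H) kd : 1 < tau -> 0 < delta -> hnorm (hsub bd b) <= delta ->
  first_stop A W rho1 rho2 tau delta bd x y kd ->
  forall m n : nat, (1 <= m)%nat -> (m < n)%nat -> (n < kd)%nat ->
  forall (xh : X) (yh : Y), feasible A D W domf b xh yh ->
    bregman f (mu n) yh (y n) + ccst tau / 2 * sum_range m n (Ek A W rho1 rho2 bd x y)
    <= bregman f (mu m) yh (y m)
       + rho2 * hs_inner (hsub (y (m - 1)%nat) (y m)) (W (hsub xh (x (S m))))
       + Cst tau * ((hnorm (W (hsub xh (x m)))) ^ 2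
                 + (hnorm (hsub (W (x m)) (y m))) ^ 2
                 + Ek A W rho1 rho2 bd x y m).
Proof.
  intros Ht Hd Hn [_ [_ Hfs]] m n Hm Hmn Hnk xh yh [Dh [Fh [Ab Wb]]].
  destruct m as [|p]; [lia|].
  assert (EL : exists L, n = S (S (p + L))) by (exists (n - S p - 1)%nat; lia).
  destruct EL as [L ->].
  assert (Hst : forall l, (l <= L)%nat -> ~ stop_crit A W rho1 rho2 tau delta bd x y (S (S (p + l)))).
  { intros l Hl. apply Hfs; lia. }
  pose proof (main_ineq p L xh yh b tau delta Dh Fh Ab Wb Ht Hd Hn Hst) as M.
  rewrite sum_range_ssum by lia. replace (S (S (p + L)) - S p)%nat with (S L) by lia.
  change (Ek A W rho1 rho2 bd x y) with EE.
  rewrite W_sub by (auto; apply Dx). rewrite W_sub by (auto; apply Dx).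
  rewrite Sm1, !hnorm_sq.
  unfold Bg, Qp, vv, ss, uu in M. rewrite Sm1 in M.
  revert M. hexp. intro M. lra.
Qed.

Lemma least (P : nat -> Prop) : (exists k, P k) -> exists k, P k /\ forall j, (j < k)%nat -> ~ P j.
Proof.
  intros [k Hk]. apply NNPP. intro Hno.
  assert (Hall : forall N j, (j <= N)%nat -> ~ P j).
  { induction N; intros j Hj Pj.
    - apply Hno. exists j. split; auto. intros; lia.
    - apply Hno. exists j. split; auto. intros i Hi Pi. apply (IHN i); auto. lia. }
  apply (Hall k k (le_n k) Hk).
Qed.

Lemma part1 tau delta (b : H) : 1 < tau -> 0 < delta -> hnorm (hsub bd b) <= delta ->
  consistent A D W domf b -> exists kd, first_stop A W rho1 rho2 tau delta bd x y kd.
Proof.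
  intros Ht Hd Hn [xh [Dh [Fh Ab]]].
  destruct (classic (exists k, (1 <= k)%nat /\ stop_crit A W rho1 rho2 tau delta bd x y k))
    as [Ex | Nex].
  - destruct (least _ Ex) as [kd [[H1 H2] H3]]. exists kd. split; [|split]; auto.
    intros k Hk1 Hk2 Hs. apply (H3 k Hk2). auto.
  - exfalso.
    assert (Hst : forall k, (1 <= k)%nat -> ~ stop_crit A W rho1 rho2 tau delta bd x y k)
      by (intros k Hk Hs; apply Nex; eauto).
    destruct (ccst_props tau Ht) as [C1 _].
    set (cc := ccst tau) in *.
    set (K := rho1 * (tau ^ 2 * delta ^ 2)).
    assert (Kp : 0 < K) by (unfold K; apply Rmult_lt_0_compat; auto;
       apply Rmult_lt_0_compat; apply pow_lt; lra).
    set (R0 := Bg (W xh) 1 - Qp xh 1 + Cst tau * (hs_inner (vv xh 1) (vv xh 1)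
        + hs_inner (ss 1) (ss 1) + EE 1)).
    assert (Hall : forall L, cc / 2 * (INR (S L) * K) <= R0).
    { intro L.
      assert (Hst' : forall l, (l <= L)%nat -> ~ stop_crit A W rho1 rho2 tau delta bd x y (S (S (0 + l)))).
      { intros l _. apply Hst; lia. }
      pose proof (main_ineq 0 L xh (W xh) b tau delta Dh Fh Ab eq_refl Ht Hd Hn Hst') as M.
      pose proof (Bg_nonneg (W xh) (S (0 + L)) Fh) as B0.
      pose proof (EE_nonneg 1) as E1.
      assert (SE : INR (S L) * K <= ssum EE 2 (S L)).
      { apply ssum_const. intros i _. pose proof (Hst (2 + i)%nat ltac:(lia)) as Hs.
        unfold stop_crit in Hs.
        pose proof (stop_fail rho1 rho2 tau delta _ _ Hr1 Hr2 (pow2_ge_0 (hnorm (hsub (A (x (2 + i)%nat)) bd)))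
          (pow2_ge_0 (hnorm (hsub (W (x (2 + i)%nat)) (y (2 + i)%nat)))) Hs) as Sf.
        rewrite !hnorm_sq in Sf. rewrite EE_eq. unfold rr, ss, uu.
        pose proof (hs_inner_nonneg _ (hsub (y (2 + i)%nat) (y (2 + i - 1)%nat))).
        assert (0 <= rho2 * hs_inner (hsub (y (2 + i)%nat) (y (2 + i - 1)%nat)) (hsub (y (2 + i)%nat) (y (2 + i - 1)%nat)))
          by (apply Rmult_le_pos; lra).
        unfold K. lra. }
      assert (cc / 2 * (INR (S L) * K) <= cc / 2 * ssum EE 2 (S L)) by (apply Rmult_le_compat_l; lra).
      fold cc in M. unfold R0. assert (0 <= cc / 2 * EE 1) by (apply Rmult_le_pos; lra). lra. }
    destruct (INR_unbounded (R0 / (cc / 2 * K))) as [N HN].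
    specialize (Hall N). rewrite S_INR in Hall.
    assert (Hp : 0 < cc / 2 * K) by (apply Rmult_lt_0_compat; lra).
    assert (R0 / (cc / 2 * K) * (cc / 2 * K) = R0) by (field; lra).
    assert (INR N * (cc / 2 * K) > R0 / (cc / 2 * K) * (cc / 2 * K))
      by (apply Rmult_gt_compat_r; auto).
    nra.
Qed.

End ADMM.

Theorem lemma2p10 :
  forall (rho2 tau c0 : R), 0 < rho2 -> 1 < tau -> 0 < c0 ->
  exists c C : R, 0 < c /\ 0 < C /\
  forall (X Y H : HilbertSpace) (A : X -> H) (D : X -> Prop) (W : X -> Y)
    (domf : Y -> Prop) (f : Y -> R) (c1 rho1 delta : R) (b bd : H)
    (x : nat -> X) (y : nat -> Y) (lam : nat -> H) (mu : nat -> Y),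
    bounded_linear A ->
    proper_lsc domf f -> strongly_convex domf f c0 ->
    densely_defined_closed D W ->
    0 < c1 ->
    (forall u, D u -> (hnorm (A u)) ^ 2 + (hnorm (W u)) ^ 2 >= c1 * (hnorm u) ^ 2) ->
    consistent A D W domf b ->
    0 < rho1 -> 0 < delta ->
    hnorm (hsub bd b) <= delta ->
    noisy_admm A D W domf f rho1 rho2 bd x y lam mu ->
    (exists kd : nat, first_stop A W rho1 rho2 tau delta bd x y kd) /\
    (forall kd : nat, first_stop A W rho1 rho2 tau delta bd x y kd ->
     forall m n : nat, (1 <= m)%nat -> (m < n)%nat -> (n < kd)%nat ->
     forall (xh : X) (yh : Y), feasible A D W domf b xh yh ->
       bregman f (mu n) yh (y n)
       + c * sum_range m n (Ek A W rho1 rho2 bd x y)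
       <= bregman f (mu m) yh (y m)
          + rho2 * hs_inner (hsub (y (m - 1)%nat) (y m)) (W (hsub xh (x (S m))))
          + C * ((hnorm (W (hsub xh (x m)))) ^ 2
                 + (hnorm (hsub (W (x m)) (y m))) ^ 2
                 + Ek A W rho1 rho2 bd x y m)).
Proof.
  intros rho2 tau c0 Hr2 Ht Hc0.
  exists (ccst c0 rho2 tau / 2), (Cst c0 rho2 tau).
  destruct (ccst_props c0 rho2 Hc0 Hr2 tau Ht) as [C1 _].
  pose proof (Kst_pos c0 rho2 Hc0 Hr2 tau Ht) as K1.
  split; [lra|]. split; [unfold Cst; lra|].
  intros X Y H A D W domf f c1 rho1 delta b bd x y lam mu HA Hlsc Hsc HW Hc1 Hco Hcons Hr1 Hd Hn Hadmm.
  split.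
  - eapply part1; eauto.
  - intros kd Hkd m n Hm Hmn Hnk xh yh Hf.
    eapply part2; eauto.
Qed.
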